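(* Let $X$ be a finite connected simplicial complex and let $B(X)=B(X,\delta)$ for the bottom perversity $\delta(k)=-k$, graded by path length. Then $B(X)$ is a Koszul algebra.
   Context: Simplices are open; $\Delta\leftrightarrow\Delta'$ means one is a face of the other. For $\delta(k)=-k$, the quiver $Q(X,\delta)$ has vertices the simplices of $X$ and an arrow $\Delta\to\Delta'$ whenever $\Delta$ is a codimension-one face of $\Delta'$. In the path algebra over a field $\mathbb F$ of characteristic $0$ (arrow generators $b(\Delta,\Delta')$, product $xy$ = path $y$ followed by $x$), $B(X)$ is the quotient by the relations $b(\Delta_1,\Delta'')b(\Delta',\Delta_1)=b(\Delta_2,\Delta'')b(\Delta',\Delta_2)$ whenever $\delta(\Delta')=k+1$, $\delta(\Delta_j)=k$, $\delta(\Delta'')=k-1$ and $\Delta'\leftrightarrow\Delta_j\leftrightarrow\Delta''$ ($j=1,2$). A positively graded ring $C=\bigoplus_{j\ge0}C_j$ with $C_0$ semisimple is Koszul if $C_0$ has a graded projective resolution $\cdots\to P^1\to P^0\to C_0\to0$ with each $P^i$ generated by its degree-$i$ component. *)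

(* Defs.v *)
From HB Require Import structures.
From mathcomp Require Import all_boot all_order all_algebra.
Set Implicit Arguments. Unset Strict Implicit. Unset Printing Implicit Defensive.
Import GRing.Theory.
Local Open Scope ring_scope.

(* A finite simplicial complex on the finite vertex type V: a family X of
   nonempty finite sets of vertices (the simplices; an abstract simplex s
   stands for the open simplex of dimension #|s| - 1), closed under taking
   nonempty subsets (faces). *)
Definition simplicial_complex (V : finType) (X : {set {set V}}) : Prop :=
  set0 \notin X /\
  forall s t : {set V}, s \in X -> t \subset s -> t != set0 -> t \in X.

Definition simp (V : finType) (X : {set {set V}}) := {s : {set V} | s \in X}.

Definition face_rel (V : finType) (X : {set {set V}}) : rel (simp X) :=
  fun s t => (val s \subset val t) || (val t \subset val s).

Definition sc_connected (V : finType) (X : {set {set V}}) : Prop :=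
  (exists s : simp X, True) /\ forall s t : simp X, connect (@face_rel V X) s t.

Definition is_arrow (V : finType) (X : {set {set V}}) (s t : simp X) : bool :=
  (val s \subset val t) && (#|val t| == (#|val s|).+1)%N.

Definition arrow (V : finType) (X : {set {set V}}) :=
  {p : simp X * simp X | is_arrow p.1 p.2}.

Definition src (V : finType) (X : {set {set V}}) (a : arrow X) : simp X := (val a).1.
Definition tgt (V : finType) (X : {set {set V}}) (a : arrow X) : simp X := (val a).2.

(* B(X) is the path algebra F Q(X,delta) (generated by the vertex idempotents
   e_Delta in degree 0 and the arrows b(Delta,Delta') in degree 1, subject to
   e_D e_G = [D = G] e_D, sum_D e_D = 1, e_{tgt a} a e_{src a} = a) modulo
   the relations b(D1,D'')b(D',D1) = b(D2,D'')b(D',D2).  A graded left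
   B(X)-module is a Z-graded F-vector space with a degree-preserving action of
   the degree-0 generators and a degree-raising-by-one action of the arrows,
   all linear, satisfying these defining relations.  (Product xy = path y
   followed by x acts as (action of x) o (action of y).) *)
Record gmod (F : fieldType) (V : finType) (X : {set {set V}}) := GMod {
  gcar :> int -> lmodType F;
  gidem : simp X -> forall n : int, gcar n -> gcar n;
  garr : arrow X -> forall n : int, gcar n -> gcar (n + 1)
}.
Arguments gcar {F V X} g n.
Arguments gidem {F V X} g D n _.
Arguments garr {F V X} g a n _.

Definition lin_map (F : fieldType) (U W : lmodType F) (f : U -> W) : Prop :=
  forall (a : F) (x y : U), f (a *: x + y) = a *: f x + f y.

Definition is_gmod (F : fieldType) (V : finType) (X : {set {set V}})
    (M : gmod F X) : Prop :=
  (forall D n, lin_map (gidem M D n)) /\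
  (forall a n, lin_map (garr M a n)) /\
  [/\
      (forall D G n (x : M n),
          gidem M D n (gidem M G n x) = if D == G then gidem M D n x else 0),
      (forall n (x : M n), \sum_(D : simp X) gidem M D n x = x),
      (forall a n (x : M n),
          garr M a n x = gidem M (tgt a) (n + 1) (garr M a n (gidem M (src a) n x)))
    & (forall a1 a2 a3 a4 : arrow X,
          src a1 = src a3 -> tgt a1 = src a2 -> tgt a3 = src a4 ->
          tgt a2 = tgt a4 ->
          forall n (x : M n),
            garr M a2 (n + 1) (garr M a1 n x) = garr M a4 (n + 1) (garr M a3 n x))].

Definition gmor (F : fieldType) (V : finType) (X : {set {set V}})
    (M N : gmod F X) (f : forall n, M n -> N n) : Prop :=
  [/\ (forall n, lin_map (f n)),
      (forall D n (x : M n), f n (gidem M D n x) = gidem N D n (f n x))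
    & (forall a n (x : M n), f (n + 1) (garr M a n x) = garr N a n (f n x))].

Arguments gmor {F V X} M N f.

Definition gprojective (F : fieldType) (V : finType) (X : {set {set V}})
    (P : gmod F X) : Prop :=
  forall (N Q : gmod F X) (g : forall n, N n -> Q n) (f : forall n, P n -> Q n),
    is_gmod N -> is_gmod Q -> gmor N Q g -> gmor P Q f ->
    (forall n (y : Q n), exists x : N n, g n x = y) ->
    exists h : forall n, P n -> N n,
      gmor P N h /\ forall n (x : P n), g n (h n x) = f n x.

(* P is generated (as a B(X)-module) by its degree-i component: the only
   graded submodule containing P_i is P itself. *)
Definition generated_in_degree (F : fieldType) (V : finType) (X : {set {set V}})
    (P : gmod F X) (i : int) : Prop :=
  forall Sub : forall n, P n -> Prop,
    (forall n, Sub n 0) ->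
    (forall n (x y : P n), Sub n x -> Sub n y -> Sub n (x + y)) ->
    (forall n (c : F) (x : P n), Sub n x -> Sub n (c *: x)) ->
    (forall D n (x : P n), Sub n x -> Sub n (gidem P D n x)) ->
    (forall a n (x : P n), Sub n x -> Sub (n + 1) (garr P a n x)) ->
    (forall x : P i, Sub i x) ->
    forall n (x : P n), Sub n x.

(* Concentrated in degree 0, where it is F^{simplices} (basis e_Delta);
   e_Delta acts by projection on the e_Delta-coordinate, arrows act by 0. *)
Section C0.
Variables (F : fieldType) (V : finType) (X : {set {set V}}).

Definition C0car (n : int) : lmodType F :=
  if n == 0 then ({ffun simp X -> F^o} : lmodType F)
  else ({ffun void -> F^o} : lmodType F).

Definition C0idem (D : simp X) (n : int) : C0car n -> C0car n :=
  match n == 0 as b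
    return GRing.Lmodule.sort (if b then ({ffun simp X -> F^o} : lmodType F)
                              else ({ffun void -> F^o} : lmodType F)) ->
           GRing.Lmodule.sort (if b then ({ffun simp X -> F^o} : lmodType F)
                              else ({ffun void -> F^o} : lmodType F))
  with
  | true => fun f : {ffun simp X -> F^o} => [ffun G => if G == D then f G else 0]
  | false => fun f => f
  end.

Definition C0 : gmod F X := @GMod F V X C0car C0idem (fun a n _ => 0).
End C0.

Definition B_koszul (F : fieldType) (V : finType) (X : {set {set V}}) : Prop :=
  exists (P : nat -> gmod F X)
         (d : forall (i : nat) (n : int), P i.+1 n -> P i n)
         (eps : forall n : int, P 0%N n -> C0 F X n),
    (forall i, is_gmod (P i)) /\
    (forall i, gprojective (P i)) /\
    (forall i : nat, generated_in_degree (P i) i%:Z) /\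
    [/\
        (forall i, gmor (P i.+1) (P i) (d i)),
        gmor (P 0%N) (C0 F X) eps,
        (forall n (y : C0 F X n), exists x : P 0%N n, eps n x = y),
        (forall n (x : P 0%N n), eps n x = 0 <-> exists y, d 0%N n y = x)
      & (forall i n (x : P i.+1 n), d i n x = 0 <-> exists y, d i.+1 n y = x)].

(* Main.v *)
Require Import Defs.
From HB Require Import structures.
From mathcomp Require Import all_boot all_order all_algebra zify ring.
From Stdlib Require Import ClassicalEpsilon Eqdep_dec.
Set Implicit Arguments. Unset Strict Implicit. Unset Printing Implicit Defensive.
Import GRing.Theory.
Local Open Scope ring_scope.

Section Main.
Variables (F : fieldType) (V : finType) (X : {set {set V}}).

Definition Tri := (simp X * simp X * {set V})%type.
Definition tD (t : Tri) := t.1.1.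
Definition tG (t : Tri) := t.1.2.
Definition tS (t : Tri) := t.2.

Definition valid (i : nat) (n : int) (t : Tri) : bool :=
  [&& val (tD t) \subset val (tG t), tS t \subset val (tG t) :\: val (tD t),
      #|tS t| == i & n == (#|val (tG t)| - #|val (tD t)|)%N%:Z].

Definition T i n := {t : Tri | valid i n t}.
Definition Pc i n : lmodType F := ({ffun T i n -> F^o} : lmodType F).

Definition get i n (f : Pc i n) (t : Tri) : F :=
  match insub t with Some u => f u | None => 0 end.
Definition mk i n (phi : Tri -> F) : Pc i n := [ffun u : T i n => phi (val u)].

Lemma get_mk i n phi t : get (mk i n phi) t = if valid i n t then phi t else 0.
Proof. by rewrite /get; case: insubP => [u -> <-|/negbTE ->] //; rewrite ffunE. Qed.

Lemma get_inv i n (f : Pc i n) t : ~~ valid i n t -> get f t = 0.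
Proof. by rewrite /get; case: insubP => [u -> //|]. Qed.

Lemma eq_get i n (f g : Pc i n) : (forall t, valid i n t -> get f t = get g t) -> f = g.
Proof.
move=> H; apply/ffunP => u; have := H (val u) (valP u).
by rewrite /get valK.
Qed.

Lemma getD i n (f g : Pc i n) t : get (f + g) t = get f t + get g t.
Proof. by rewrite /get; case: insub => [u|]; rewrite ?ffunE ?addr0. Qed.
Lemma getZ i n c (f : Pc i n) t : get (c *: f) t = c * get f t.
Proof. by rewrite /get; case: insub => [u|]; rewrite ?ffunE ?mulr0. Qed.
Lemma get0 i n t : get (0 : Pc i n) t = 0.
Proof. by rewrite /get; case: insub => [u|]; rewrite ?ffunE. Qed.
Lemma get_sum i n (I : finType) (f : I -> Pc i n) t :
  get (\sum_j f j) t = \sum_j get (f j) t.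
Proof.
elim/big_rec2: _ => [|j y g _ <-]; first exact: get0.
by rewrite getD.
Qed.

Definition dl i n (t0 : Tri) : Pc i n := mk i n (fun t => (t == t0)%:R).

Lemma decomp i n (f : Pc i n) : f = \sum_t get f t *: dl i n t.
Proof.
apply: eq_get => t vt; rewrite get_sum.
rewrite (bigD1 t) //= big1 ?addr0; first by rewrite getZ get_mk vt eqxx mulr1.
by move=> t' ne; rewrite getZ get_mk vt eq_sym (negbTE ne) mulr0.
Qed.

End Main.

Section Ops.
Variables (F : fieldType) (V : finType) (X : {set {set V}}).
Local Notation Tri := (Tri X).
Local Notation Pc := (Pc F X).

Lemma arrP (a : arrow X) : sval (src a) \subset sval (tgt a) /\ #|sval (tgt a)| = (#|sval (src a)|).+1.
Proof. rewrite /src /tgt; case: a => [[s t] h] /=; case/andP: h => h /eqP e; by split. Qed.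

Lemma valid_arr i n (a : arrow X) D S :
  valid i n (D, src a, S) -> valid i (n + 1) (D, tgt a, S).
Proof.
case: (arrP a) => sub e.
rewrite /valid /tD /tG /tS /= => /and4P [h1 h2 h3 /eqP h4].
apply/and4P; split => //.
- exact: subset_trans sub.
- by apply: subset_trans h2 _; apply: setSD.
- have le := subset_leq_card h1.
  by apply/eqP; rewrite h4 e subSn // -addn1 PoszD.
Qed.

Lemma valid_arr_inv i n (a : arrow X) D S :
  valid i (n + 1) (D, tgt a, S) -> val D \subset val (src a) -> S \subset val (src a) ->
  valid i n (D, src a, S).
Proof.
case: (arrP a) => sub e.
rewrite /valid /tD /tG /tS /= => /and4P [h1 h2 h3 /eqP h4] h5 h6.
apply/and4P; split => //.
- rewrite subsetD h6 /=. by move: h2; rewrite subsetD => /andP [].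
- have le := subset_leq_card h5.
  by apply/eqP; move: h4; rewrite e subSn // -addn1 PoszD => /addIr.
Qed.

Definition idem i (D : simp X) n (f : Pc i n) : Pc i n :=
  mk i n (fun t => if tG t == D then get f t else 0).
Definition arr i (a : arrow X) n (f : Pc i n) : Pc i (n + 1) :=
  mk i (n + 1) (fun t => if tG t == tgt a then get f (tD t, src a, tS t) else 0).

Lemma get_idem i D n (f : Pc i n) t : get (idem D f) t = if tG t == D then get f t else 0.
Proof. rewrite get_mk; case: ifP => // /negbT /(get_inv f) ->; by case: ifP. Qed.

Lemma get_arr i a n (f : Pc i n) t :
  get (arr a f) t = if tG t == tgt a then get f (tD t, src a, tS t) else 0.
Proof.
rewrite get_mk; case: ifP => // vt; case: ifP => // /eqP e.
apply/esym/get_inv; apply: contraFN vt; case: t e => [[D G] S]; rewrite /tG /tD /tS /= => -> .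
exact: valid_arr.
Qed.

Definition Pm i : gmod F X := @GMod F V X (Pc i) (fun D n => @idem i D n) (fun a n => @arr i a n).

Lemma Pm_gmod i : is_gmod (Pm i).
Proof.
split; [|split; [|split]].
- move=> D n c x y; apply: eq_get => t _.
  by rewrite !(get_idem, getD, getZ); case: ifP; rewrite ?mulr0 ?addr0.
- move=> a n c x y; apply: eq_get => t _.
  by rewrite !(get_arr, getD, getZ); case: ifP; rewrite ?mulr0 ?addr0.
- move=> D G n x; apply: eq_get => t _ /=.
  case: (eqVneq D G) => [->|ne]; first by rewrite !get_idem; case: (tG t == G).
  rewrite get0 !get_idem; case: (eqVneq (tG t) D) => // e.
  by rewrite e (negbTE ne).
- move=> n x; apply: eq_get => t _ /=.
  rewrite get_sum (bigD1 (tG t)) //= big1 ?addr0; first by rewrite get_idem eqxx.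
  by move=> D ne; rewrite get_idem eq_sym (negbTE ne).
- move=> a n x; apply: eq_get => t _ /=.
  rewrite !(get_idem, get_arr); case: ifP => // _.
  by rewrite /tG /= eqxx.
- move=> a1 a2 a3 a4 e13 e12 e34 e24 n x; apply: eq_get => t _ /=.
  rewrite !get_arr /tG /tD /tS /= -e12 -e34 e13 e24 !eqxx.
  by case: ifP.
Qed.

End Ops.

Section Gen.
Variables (F : fieldType) (V : finType) (X : {set {set V}}).
Hypothesis hX : simplicial_complex X.
Local Notation Tri := (Tri X).
Local Notation Pc := (Pc F X).

Lemma get_dl i n (t0 t : Tri) : get (dl F i n t0) t = (valid i n t && (t == t0))%:R.
Proof. by rewrite get_mk; case: ifP. Qed.

Lemma arr_dl i n (a : arrow X) D S : valid i n (D, src a, S) ->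
  arr a (dl F i n (D, src a, S)) = dl F i (n + 1) (D, tgt a, S).
Proof.
move=> v; apply: eq_get => [[[D' G'] S']] vt.
rewrite get_arr !get_dl vt /tG /tD /tS /=.
case: (eqVneq G' (tgt a)) => [->|ne]; last first.
  by rewrite !xpair_eqE (negbTE ne) andbF.
rewrite !xpair_eqE !eqxx !andbT.
case: (eqVneq D' D) => [->|]; last by rewrite andbF.
by case: (eqVneq S' S) => [->|]; rewrite ?v ?andbF.
Qed.

Lemma idem_dl i n D (t0 : Tri) : idem D (dl F i n t0) = if tG t0 == D then dl F i n t0 else 0.
Proof.
apply: eq_get => t vt; rewrite get_idem get_dl.
case: (eqVneq t t0) => [->|ne]; first by case: ifP => _; rewrite ?get_dl ?get0 ?eqxx.
rewrite andbF; case: ifP => _; case: ifP => _; by rewrite ?get_dl ?get0 ?(negbTE ne) ?andbF.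
Qed.

Lemma sub_lin (U : lmodType F) (Sub : U -> Prop) (I : finType) (c : I -> F) (v : I -> U) :
  Sub 0 -> (forall x y, Sub x -> Sub y -> Sub (x + y)) ->
  (forall c x, Sub x -> Sub (c *: x)) ->
  (forall j, c j != 0 -> Sub (v j)) -> Sub (\sum_j c j *: v j).
Proof.
move=> h0 hD hZ hv; elim/big_ind: _ => // j _.
by case: (eqVneq (c j) 0) => [->|/hv]; [rewrite scale0r | apply: hZ].
Qed.

Lemma valid_get i n (f : Pc i n) (t : Tri) : get f t != 0 -> valid i n t.
Proof. by apply: contraR => /(get_inv f) ->. Qed.

Lemma simp_ne0 (D : simp X) : sval D != set0.
Proof. case: D => D h /=; apply: contraNneq hX.1 => e; by rewrite -e. Qed.

Lemma Pm_gen i : generated_in_degree (Pm F X i) i%:Z.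
Proof.
move=> Sub h0 hD hZ hI hA hi.
suff key : forall k n t, valid i n t -> (#|sval (tG t)| - #|sval (tD t)| - i)%N = k ->
    Sub n (dl F i n t).
  move=> n x; rewrite (decomp x); apply: (sub_lin (h0 n) (hD n) (hZ n)) => t ht; have vt := valid_get ht.
  exact: key vt erefl.
elim=> [|k IH] n [[D G] S]; rewrite /tD /tG /tS /= => vt hk;
  move: (vt); rewrite /valid /tD /tG /tS /= => /and4P [h1 h2 /eqP h3 /eqP h4].
  have hle : (i <= #|sval G| - #|sval D|)%N.
    by rewrite -h3 -{1}(setIidPr h1) -cardsD; exact: subset_leq_card h2.
  have En : n = i%:Z by rewrite h4; congr Posz; move: hk hle; rewrite /tD /tG /=; lia.
  by clear h4; subst n; apply: hi.
have hDS : sval D :|: S \subset sval G.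
  by rewrite subUset h1 /=; apply: subset_trans h2 (subsetDl _ _).
have cDS : #|sval D :|: S| = (#|sval D| + i)%N.
  rewrite -h3 -cardsUI; suff -> : sval D :&: S = set0 by rewrite cards0 addn0.
  apply/setP => x; rewrite !inE; apply/negbTE; apply/andP => [[xD xS]].
  by have := subsetP h2 x xS; rewrite inE xD.
have /properP [_ [v vG vDS]] : sval D :|: S \proper sval G.
  rewrite properEcard hDS /= cDS; move: hk; rewrite /tD /tG /=; lia.
have vD : v \notin sval D by apply: contra vDS; rewrite inE => ->.
have vS : v \notin S by apply: contra vDS; rewrite inE orbC => ->.
have G'X : sval G :\ v \in X.
  apply: hX.2 (valP G) (subsetDl _ _) _.
  apply: contraNneq (simp_ne0 D) => e; apply/eqP/setP => x; rewrite inE.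
  apply/negbTE; apply/negP => xD.
  have : x \in sval G :\ v by rewrite !inE (subsetP h1 x xD) andbT; apply: contraNneq vD => <-.
  by rewrite e inE.
pose G' : simp X := exist _ (sval G :\ v) G'X.
have cG : #|sval G| = (#|sval G'|).+1 by rewrite /= (cardsD1 v (sval G)) vG.
have ha : is_arrow G' G by rewrite /is_arrow /= subsetDl /= cG eqxx.
pose a : arrow X := exist _ (G', G) ha.
have [m Em] : exists m, n = m + 1 by exists (n - 1); rewrite subrK.
rewrite {}Em in vt h4 *.
have hDG' : sval D \subset sval G'.
  apply/subsetP => x xD; rewrite !inE (subsetP h1 x xD) andbT.
  by apply: contraNneq vD => <-.
have le' := subset_leq_card hDG'.
have vt' : valid i m (D, src a, S).
  rewrite /valid /tD /tG /tS /=; apply/and4P; split => //.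
  - apply/subsetP => x xS; have := subsetP h2 x xS; rewrite !inE => /andP [-> ->].
    by rewrite andbT; apply: contraNneq vS => <-.
  - by rewrite h3.
  - apply/eqP; apply: (@addIr _ 1); rewrite h4 cG subSn //.
    by rewrite -addn1 PoszD.
have -> : dl F i (m + 1) (D, G, S) = arr a (dl F i m (D, src a, S)) by rewrite arr_dl.
apply: (hA a m); apply: IH vt' _.
rewrite /tG /tD /=; move: hk le'; rewrite cG /=; lia.
Qed.

End Gen.

Lemma diamond (V : finType) (G A B : {set V}) : A \subset G -> B \subset G ->
  #|G| = #|A|.+1 -> #|G| = #|B|.+1 -> A != B ->
  #|A| = (#|A :&: B|).+1 /\ #|B| = (#|A :&: B|).+1.
Proof.
move=> sA sB cA cB ne.
have hU : #|A :|: B| = #|G|.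
  apply/eqP; rewrite eqn_leq subset_leq_card ?subUset ?sA ?sB //=.
  rewrite cA ltnNge; apply: contra ne => le.
  have sBA : B \subset A.
    have /eqP -> : A == A :|: B by rewrite eqEcard subsetUl le.
    exact: subsetUr.
  by rewrite eq_sym eqEcard sBA /= -ltnS -cB -cA.
have := cardsUI A B; rewrite hU; lia.
Qed.

Section Reach.
Variables (F : fieldType) (V : finType) (X : {set {set V}}).
Hypothesis hX : simplicial_complex X.
Variables (N : gmod F X) (hN : is_gmod N).

Definition pt := {n : int & N n}.
Definition Phi (a : arrow X) (r : pt) : pt := existT _ (projT1 r + 1) (garr N a _ (projT2 r)).

Inductive reach (G0 : simp X) (p0 : pt) : simp X -> pt -> Prop :=
 | R0 : reach G0 p0 G0 p0
 | RS : forall (a : arrow X) (r : pt), reach G0 p0 (src a) r -> reach G0 p0 (tgt a) (Phi a r).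

Lemma reach_sub (G0 : simp X) (p0 : pt) (G : simp X) (p : pt) : reach G0 p0 G p ->
  sval G0 \subset sval G /\ projT1 p = projT1 p0 + (#|sval G| - #|sval G0|)%N%:Z.
Proof.
elim=> [|a r _ [IH1 IH2]]; first by rewrite subxx subnn addr0.
case: (arrP a) => s e; split; first exact: subset_trans s.
have le := subset_leq_card IH1.
by rewrite /= IH2 e subSn // -addn1 PoszD addrA.
Qed.

Lemma drop_arrow (G : simp X) v : v \in sval G -> sval G :\ v != set0 ->
  exists a : arrow X, sval (src a) = sval G :\ v /\ tgt a = G.
Proof.
move=> vG ne.
have G'X : sval G :\ v \in X by apply: hX.2 (valP G) (subsetDl _ _) ne.
pose G' : simp X := exist _ (sval G :\ v) G'X.
have cG : #|sval G| = (#|sval G'|).+1 by rewrite /= (cardsD1 v (sval G)) vG.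
have ha : is_arrow G' G by rewrite /is_arrow /= subsetDl /= cG eqxx.
by exists (exist _ (G', G) ha).
Qed.

Lemma reach_ex (G0 : simp X) (p0 : pt) (G : simp X) : sval G0 \subset sval G -> exists p, reach G0 p0 G p.
Proof.
move=> sG; move: {2}(#|sval G| - #|sval G0|)%N (erefl (#|sval G| - #|sval G0|)%N) => k.
elim: k G sG => [|k IH] G sG hk.
  have -> : G = G0.
    by apply/val_inj/eqP; rewrite eq_sym eqEcard sG /= -subn_eq0 hk.
  by exists p0; constructor.
have /properP [_ [v vG vG0]] : sval G0 \proper sval G.
  by rewrite properEcard sG /= -subn_gt0 hk.
have ne : sval G :\ v != set0.
  apply: contraNneq (simp_ne0 hX G0) => e; apply/eqP/setP => x; rewrite inE.
  apply/negbTE; apply/negP => xG0.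
  have : x \in sval G :\ v by rewrite !inE (subsetP sG x xG0) andbT; apply: contraNneq vG0 => <-.
  by rewrite e inE.
have [a [sa ta]] := drop_arrow vG ne.
have sG' : sval G0 \subset sval (src a).
  rewrite sa; apply/subsetP => x xG0; rewrite !inE (subsetP sG x xG0) andbT.
  by apply: contraNneq vG0 => <-.
have hk' : (#|sval (src a)| - #|sval G0|)%N = k.
  have le := subset_leq_card sG'.
  by move: hk; rewrite (cardsD1 v (sval G)) vG add1n -sa subSn // => -[].
have [r hr] := IH (src a) sG' hk'.
by exists (Phi a r); rewrite -ta; constructor.
Qed.

Lemma lin0 (U W : lmodType F) (f : U -> W) : lin_map f -> f 0 = 0.
Proof. by move=> hf; have := hf (-1) 0 0; rewrite scaler0 addr0 scaleN1r addNr. Qed.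

Lemma lin_sum (U W : lmodType F) (f : U -> W) (I : finType) (c : I -> F) (v : I -> U) :
  lin_map f -> f (\sum_j c j *: v j) = \sum_j c j *: f (v j).
Proof.
move=> hf; elim/big_rec2: _ => [|j y1 y2 _ <-]; first exact: lin0.
by rewrite hf.
Qed.

Lemma reach_idem (G0 : simp X) (p0 : pt) (G : simp X) (p : pt) :
  gidem N G0 _ (projT2 p0) = projT2 p0 -> reach G0 p0 G p ->
  gidem N G _ (projT2 p) = projT2 p.
Proof.
case: hN => _ [_ [h1 _ h3 _]] e0; elim=> // a [n z] _ _ /=.
by rewrite h3 h1 eqxx.
Qed.

Lemma reach_inv (G0 : simp X) (p0 : pt) (G : simp X) (p : pt) : reach G0 p0 G p ->
  (G = G0 /\ p = p0) \/ exists a r, [/\ G = tgt a, p = Phi a r & reach G0 p0 (src a) r].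
Proof. case=> [|a r h]; [by left | by right; exists a, r]. Qed.

Lemma arrow_eq (a b : arrow X) : src a = src b -> tgt a = tgt b -> a = b.
Proof.
case: a => [[s t] h]; case: b => [[s' t'] h']; rewrite /src /tgt /= => e1 e2.
subst; congr exist; exact: bool_irrelevance.
Qed.

Lemma reach_uniq (G0 : simp X) (p0 : pt) (G : simp X) (p q : pt) :
  reach G0 p0 G p -> reach G0 p0 G q -> p = q.
Proof.
case: hN => _ [_ [_ _ _ hsq]].
move: {2}(#|sval G|).+1 (ltnSn #|sval G|) => k.
elim: k G p q => // k IH G p q hGk hp hq.
have noR0 : forall a r, reach G0 p0 (src a) r -> tgt a = G0 -> False.
  move=> a r hr e; have [s _] := reach_sub hr; have := subset_leq_card s.
  by case: (arrP a) => _; rewrite e => ->; rewrite ltnn.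
case: (reach_inv hp) => [[eG ep]|[a [r [eG ep hr]]]];
case: (reach_inv hq) => [[eG' eq]|[b [r' [eG' eq hr']]]].
- by rewrite ep eq.
- by case: (noR0 b r' hr'); rewrite -eG'.
- by case: (noR0 a r hr); rewrite -eG.
have ltA : (#|sval (src a)| < k)%N.
  by case: (arrP a) => _ e; move: hGk; rewrite eG e.
have ltB : (#|sval (src b)| < k)%N.
  by case: (arrP b) => _ e; move: hGk; rewrite eG' e.
rewrite ep eq.
case: (eqVneq (src a) (src b)) => [eab|neab].
  have eab' : a = b by apply: arrow_eq; rewrite // -eG -eG'.
  by subst b; congr Phi; apply: IH ltA hr hr'.
have [sa ca] := arrP a; have [sb cb] := arrP b.
rewrite -eG in sa ca; rewrite -eG' in sb cb.
have [cA cB] := diamond sa sb ca cb (contra (fun e => introT eqP (val_inj (eqP e))) neab).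
have [s0a _] := reach_sub hr; have [s0b _] := reach_sub hr'.
have s0C : sval G0 \subset sval (src a) :&: sval (src b) by rewrite subsetI s0a s0b.
have CX : sval (src a) :&: sval (src b) \in X.
  apply: hX.2 (valP (src a)) (subsetIl _ _) _.
  apply: contraNneq (simp_ne0 hX G0) => e; apply/eqP; apply/setP => x; rewrite inE.
  by apply/negbTE; apply/negP => /(subsetP s0C); rewrite e inE.
pose C : simp X := exist (fun s => s \in X) _ CX.
have h1 : is_arrow C (src a) by rewrite /is_arrow /= subsetIl cA eqxx.
have h2 : is_arrow C (src b) by rewrite /is_arrow /= subsetIr cB eqxx.
pose c1 : arrow X := exist _ (C, src a) h1.
pose c2 : arrow X := exist _ (C, src b) h2.
have [[m w] hw] := @reach_ex G0 p0 C s0C.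
have e1 : r = Phi c1 (existT _ m w) by apply: IH ltA hr (RS (a := c1) hw).
have e2 : r' = Phi c2 (existT _ m w) by apply: IH ltB hr' (RS (a := c2) hw).
rewrite e1 e2 /Phi /=; congr existT.
by apply: hsq => //; rewrite -eG -eG'.
Qed.

End Reach.

Section Proj.
Variables (F : fieldType) (V : finType) (X : {set {set V}}).
Hypothesis hX : simplicial_complex X.
Variable i : nat.
Variables (N Q : gmod F X) (hN : is_gmod N).
Unset Implicit Arguments.
Variables (g : forall n, N n -> Q n) (f : forall n, Pm F X i n -> Q n).
Set Implicit Arguments.
Hypotheses (hg : gmor N Q g) (hf : gmor (Pm F X i) Q f)
  (surj : forall n (y : Q n), exists x : N n, g n x = y).
Local Notation Tri := (Tri X).

Definition x0 (D : simp X) (S : {set V}) : N i :=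
  epsilon (inhabits 0) (fun x : N i => g i x =
    \sum_(G0 : simp X | sval G0 == sval D :|: S) f i (dl F i i (D, G0, S))).

Lemma x0_spec D S : g i (x0 D S) =
    \sum_(G0 : simp X | sval G0 == sval D :|: S) f i (dl F i i (D, G0, S)).
Proof. rewrite /x0; apply: (epsilon_spec (inhabits (0 : N i)) (fun x : N i => g i x = _)); exact: surj. Qed.

Definition start (D : simp X) (S : {set V}) (G0 : simp X) : pt N :=
  existT _ (i%:Z) (gidem N G0 i (x0 D S)).

Definition H n (t : Tri) : N n :=
  epsilon (inhabits 0) (fun z : N n => exists G0 : simp X, sval G0 = sval (tD t) :|: tS t /\
     reach G0 (start (tD t) (tS t) G0) (tG t) (existT _ n z)).

Lemma valid_up n (D G0 G : simp X) S : valid i i (D, G0, S) -> sval G0 \subset sval G ->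
  n = i%:Z + (#|sval G| - #|sval G0|)%N%:Z -> valid i n (D, G, S).
Proof.
rewrite /valid /tD /tG /tS /= => /and4P [h1 h2 /eqP h3 /eqP h4] s ->.
have l1 := subset_leq_card h1; have l2 := subset_leq_card s.
apply/and4P; split.
- exact: subset_trans s.
- by apply: subset_trans h2 _; apply: setSD.
- by rewrite h3.
- by apply/eqP; rewrite -PoszD; congr Posz; move: h4 => [->]; lia.
Qed.

Lemma gen_of n (t : Tri) : valid i n t -> exists G0 : simp X,
  [/\ sval G0 = sval (tD t) :|: tS t, valid i i (tD t, G0, tS t) & sval G0 \subset sval (tG t)].
Proof.
case: t => [[D G] S]; rewrite /valid /tD /tG /tS /= => /and4P [h1 h2 /eqP h3 /eqP h4].
have sub : sval D :|: S \subset sval G by rewrite subUset h1 /=; apply: subset_trans h2 (subsetDl _ _).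
have GX : sval D :|: S \in X.
  apply: hX.2 (valP G) sub _; apply: contraNneq (simp_ne0 hX D) => e.
  by apply/eqP/setP => x; rewrite inE; apply/negbTE; apply/negP => xD; move: e => /setP /(_ x); rewrite !inE xD.
exists (exist (fun s => s \in X) _ GX); split => //=.
have dis : sval D :&: S = set0.
  apply/setP => x; rewrite !inE; apply/negbTE; apply/andP => [[xD xS]].
  by have := subsetP h2 x xS; rewrite inE xD.
apply/and4P; split => //; rewrite ?subsetUl ?h3 //.
- by apply/subsetP => x xS; rewrite !inE xS orbT andbT; have := subsetP h2 x xS; rewrite inE => /andP [].
- by apply/eqP; congr Posz; have := cardsUI (sval D) S; rewrite dis cards0 h3 addn0 => ->; rewrite addKn.
Qed.

Lemma H_spec n (t : Tri) : valid i n t -> exists G0 : simp X,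
  [/\ sval G0 = sval (tD t) :|: tS t, valid i i (tD t, G0, tS t) &
      reach G0 (start (tD t) (tS t) G0) (tG t) (existT _ n (H n t))].
Proof.
move=> vt; have [G0 [e0 v0 s0]] := gen_of vt.
have [[m z] hz] := reach_ex hX (start (tD t) (tS t) G0) s0.
have [_ em] := reach_sub hz; rewrite /= in em.
have emn : m = n.
  rewrite em /=; move: vt v0 s0; case: t {hz em e0} => [[D G] S].
  rewrite /valid /tD /tG /tS /= => /and4P [h1 _ _ /eqP ->] /and4P [h1' _ _ /eqP h4] s0.
  rewrite -PoszD; congr Posz; move: h4 => [h4].
  have := subset_leq_card s0; have := subset_leq_card h1'; lia.
clear em; subst m.
have : exists z, exists G0 : simp X, sval G0 = sval (tD t) :|: tS t /\
     reach G0 (start (tD t) (tS t) G0) (tG t) (existT _ n z) by exists z, G0.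
move=> /(epsilon_spec (inhabits 0)) [G1 [e1 h1]].
have eG : G1 = G0 by apply: val_inj; rewrite /= e0 e1.
by subst G1; exists G0.
Qed.

Lemma H_uniq n (t : Tri) (G0 : simp X) (z : N n) : valid i n t ->
  sval G0 = sval (tD t) :|: tS t ->
  reach G0 (start (tD t) (tS t) G0) (tG t) (existT _ n z) -> H n t = z.
Proof.
move=> vt e0 hz; have [G1 [e1 _ h1]] := H_spec vt.
have eG : G1 = G0 by apply: val_inj; rewrite /= e0 e1.
subst G1; have := reach_uniq hX hN h1 hz.
exact: inj_pair2_eq_dec (@eq_comparable _) _ _ _ _.
Qed.

Lemma g_reach (D : simp X) S (G0 : simp X) : sval G0 = sval D :|: S -> valid i i (D, G0, S) ->
  forall G p, reach G0 (start D S G0) G p ->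
  g (projT1 p) (projT2 p) = f (projT1 p) (dl F i (projT1 p) (D, G, S)).
Proof.
move=> e0 v0 G p; case: hg => _ gI gA; case: hf => _ fI fA.
elim=> [|a [m z] hr IH] /=.
  rewrite gI x0_spec (big_pred1 G0) => [|G'].
    by rewrite -fI /= idem_dl /tG /= eqxx.
  apply/idP/idP => [/eqP e|/eqP ->]; last by rewrite e0.
  by apply/eqP/val_inj; rewrite /= e e0.
rewrite gA IH -fA /= arr_dl //.
have [s em] := reach_sub hr; rewrite /= in em.
exact: valid_up v0 s em.
Qed.

Definition h (n : int) : Pm F X i n -> N n := fun x => \sum_(t : Tri) get x t *: H n t.
Arguments h : clear implicits.

Lemma h_lin n : lin_map (h n).
Proof.
move=> c x y; rewrite /h scaler_sumr -big_split /=; apply: eq_bigr => t _.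
by rewrite getD getZ scalerDl scalerA.
Qed.

Lemma H_idem n (t : Tri) : valid i n t -> gidem N (tG t) n (H n t) = H n t.
Proof.
move=> vt; have [G0 [e0 v0 hr]] := H_spec vt.
apply: (reach_idem hN _ hr) => /=.
by case: hN => _ [_ [h1 _ _ _]]; rewrite h1 eqxx.
Qed.

Lemma h_dl n (t : Tri) : valid i n t -> h n (dl F i n t) = H n t.
Proof.
move=> vt; rewrite /h (bigD1 t) //= big1 ?addr0; first by rewrite get_dl vt eqxx scale1r.
by move=> t' ne; rewrite get_dl (negbTE ne) andbF scale0r.
Qed.

Lemma arr_dl0 n (a : arrow X) (t : Tri) : tG t != src a -> arr a (dl F i n t) = 0.
Proof.
move=> ne; apply: eq_get => u _; rewrite get_arr get0 get_dl.
case: ifP => // _; case: eqVneq => [e|]; last by rewrite andbF.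
by move: ne; rewrite -e /tG eqxx.
Qed.

Lemma gmor_h : gmor (Pm F X i) N h.
Proof.
have [linI [linA [h1 _ h3 _]]] := hN.
have [_ [linPA _]] := Pm_gmod F X i.
split.
- exact: h_lin.
- move=> D n x; rewrite /= {2}/h (lin_sum _ _ (linI D n)) /h; apply: eq_bigr => t _.
  rewrite get_idem; case: (eqVneq (get x t) 0) => [->|nz]; first by rewrite if_same !scale0r.
  have vt := valid_get nz; rewrite -(H_idem vt) h1.
  case: (eqVneq (tG t) D) => [->|ne]; first done.
  by rewrite scale0r scaler0.
- move=> a n x; rewrite (decomp x).
  rewrite (lin_sum _ _ (linPA a n)) (lin_sum _ _ (@h_lin (n + 1))) (lin_sum _ _ (@h_lin n)).
  rewrite (lin_sum _ _ (linA a n)); apply: eq_bigr => t _.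
  case: (eqVneq (get x t) 0) => [->|nz]; first by rewrite !scale0r.
  have vt := valid_get nz; congr (_ *: _); rewrite h_dl //.
  case: (eqVneq (tG t) (src a)) => [e|ne]; last first.
    rewrite /= arr_dl0 // (lin0 (@h_lin _)) h3 -(H_idem vt) h1 eq_sym (negbTE ne).
    by rewrite (lin0 (linA a n)) (lin0 (linI _ _)).
  move: vt; case: t e nz => [[D G] S]; rewrite /tG /= => -> _ vt.
  rewrite /= arr_dl // h_dl; last exact: valid_arr.
  have [G0 [e0 v0 hr]] := H_spec vt.
  apply: (H_uniq (valid_arr vt) e0); exact: (RS hr).
Qed.

Lemma proj_lift : exists h0 : forall n, Pm F X i n -> N n,
  gmor (Pm F X i) N h0 /\ forall n (x : Pm F X i n), g n (h0 n x) = f n x.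
Proof.
exists h; split; first exact: gmor_h.
have [glin _ _] := hg; have [flin _ _] := hf.
move=> n x; rewrite {2}(decomp x) /h (lin_sum _ _ (glin n)) (lin_sum _ _ (flin n)).
apply: eq_bigr => t _.
case: (eqVneq (get x t) 0) => [->|nz]; first by rewrite !scale0r.
have vt := valid_get nz; congr (_ *: _).
have [G0 [e0 v0 hr]] := H_spec vt.
by have := g_reach e0 v0 hr; case: t {vt nz e0 v0 hr}.
Qed.

End Proj.

Lemma Pm_proj (F : fieldType) (V : finType) (X : {set {set V}}) (hX : simplicial_complex X) i :
  gprojective (Pm F X i).
Proof. move=> N Q g f hN _ hg hf surj; exact: proj_lift. Qed.

Section Cx.
Variables (F : fieldType) (V : finType) (X : {set {set V}}).
Local Notation Tri := (Tri X).
Local Notation Pc := (Pc F X).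

Definition rk (v : V) : nat := enum_rank v.
Lemma rk_inj : injective rk.
Proof. by move=> u v /val_inj /enum_rank_inj. Qed.

Definition sg (S : {set V}) (w : V) : F := (-1) ^+ #|[set u in S | (rk u < rk w)%N]|.

Lemma sg_add (S : {set V}) (v w : V) : v \notin S ->
  sg (v |: S) w = (if (rk v < rk w)%N then -1 else 1) * sg S w.
Proof.
move=> vS; rewrite /sg.
have -> : [set u in v |: S | (rk u < rk w)%N] =
    (if (rk v < rk w)%N then v |: [set u in S | (rk u < rk w)%N] else [set u in S | (rk u < rk w)%N]).
  apply/setP => u; rewrite !inE; case: ifP => h; rewrite ?inE;
  by case: (eqVneq u v) => [->|]; rewrite ?h ?(negbTE vS) //= andbF.
case: ifP => _; last by rewrite mul1r.
by rewrite cardsU1 inE (negbTE vS) /= exprS.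
Qed.

Lemma sg_min (S : {set V}) (v : V) : (forall u, u \in S -> (rk v <= rk u)%N) -> sg S v = 1.
Proof.
move=> h; rewrite /sg; have -> : [set u in S | (rk u < rk v)%N] = set0.
  apply/setP => u; rewrite !inE; apply/negbTE; apply/andP => [[uS lt]].
  by have := h u uS; rewrite leqNgt lt.
by rewrite cards0 expr0.
Qed.

Lemma get_bad j n (f : Pc j n) (D G : simp X) (S : {set V}) :
  ~~ (sval D \subset sval G) || ~~ (S \subset sval G) -> get f (D, G, S) = 0.
Proof.
move=> h; apply: get_inv; apply: contraL h => /and4P [h1 h2 _ _] /=.
rewrite negb_or !negbK h1 /=; apply: subset_trans h2 (subsetDl _ _).
Qed.

Lemma get_bad' j n (f : Pc j n) (D G : simp X) (S : {set V}) (w : V) :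
  w \in S -> w \notin sval G :\: sval D -> get f (D, G, S) = 0.
Proof.
move=> wS wA; apply: get_inv; apply: contraNN wA => /and4P [_ h2 _ _].
exact: subsetP h2 w wS.
Qed.

Lemma valid_addw j n (D G : simp X) (S : {set V}) (w : V) : valid j n (D, G, S) -> w \notin S ->
  valid j.+1 n (D, G, w |: S) = (w \in sval G :\: sval D).
Proof.
rewrite /valid /tD /tG /tS /= => /and4P [h1 h2 /eqP h3 h4] wS.
by rewrite h1 h4 cardsU1 wS h3 subUset sub1set h2 /= add1n eqxx !andbT.
Qed.

Lemma valid_delv j n (D G : simp X) (S : {set V}) (v : V) : valid j.+1 n (D, G, S) -> v \in S ->
  valid j n (D, G, S :\ v).
Proof.
rewrite /valid /tD /tG /tS /= => /and4P [h1 h2 /eqP h3 h4] vS.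
rewrite h1 h4 (subset_trans (subsetDl _ _) h2) /=.
by move: h3; rewrite (cardsD1 v S) vS add1n => -[->]; rewrite eqxx.
Qed.

Definition d i n (f : Pc i.+1 n) : Pc i n :=
  mk i n (fun t => \sum_(w : V | w \notin tS t) sg (tS t) w * get f (tD t, tG t, w |: tS t)).

Lemma d_gmor i : gmor (Pm F X i.+1) (Pm F X i) (@d i).
Proof.
split.
- move=> n c x y; apply: eq_get => t vt; rewrite getD getZ !get_mk vt.
  rewrite mulr_sumr -big_split /=; apply: eq_bigr => w _.
  by rewrite getD getZ mulrDr mulrCA.
- move=> D n x; apply: eq_get => t vt /=; rewrite get_idem !get_mk vt.
  case: ifP => e; first by apply: eq_bigr => w _; rewrite get_idem /tG /= e.
  by rewrite big1 // => w _; rewrite get_idem /tG /= e mulr0.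
- move=> a n x; apply: eq_get => [[[D G] S]] vt /=; rewrite get_arr !get_mk vt /tG /tD /tS /=.
  case: (eqVneq G (tgt a)) => [eG|ne]; last first.
    by rewrite big1 // => w _; rewrite get_arr /tG /= (negbTE ne) mulr0.
  subst G; case: ifP => v'.
    by apply: eq_bigr => w _; rewrite get_arr /tG /= eqxx.
  rewrite big1 // => w _; rewrite get_arr /tG /= eqxx.
  have : ~~ (sval D \subset sval (src a)) || ~~ (S \subset sval (src a)).
    rewrite -negb_and; apply/negP => /andP [h1 h2].
    by move: v'; rewrite /tD /tG /tS /= (valid_arr_inv vt h1 h2).
  case/orP => h; rewrite get_bad ?mulr0 //; first by rewrite h.
  apply/orP; right; apply: contra h; exact: subset_trans (subsetUr _ _).
Qed.

End Cx.

Section Cx2.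
Variables (F : fieldType) (V : finType) (X : {set {set V}}).
Local Notation Tri := (Tri X).
Local Notation Pc := (Pc F X).

Lemma antisym_sum (I : finType) (A : I -> I -> F) : (2 : F) != 0 ->
  (forall w u, A u w = - A w u) -> \sum_w \sum_u A w u = 0.
Proof.
move=> two anti.
have e : \sum_w \sum_u A w u = - \sum_w \sum_u A w u.
  rewrite {1}exchange_big /= -sumrN; apply: eq_bigr => u _.
  by rewrite -sumrN; apply: eq_bigr => w _; rewrite anti.
apply/eqP; move: e => /eqP; rewrite -subr_eq0 opprK -mulr2n -mulr_natr mulf_eq0.
by rewrite (negbTE two) orbF.
Qed.

Lemma dd i n (f : Pc i.+2 n) : (2 : F) != 0 -> d (d f) = 0.
Proof.
move=> two; apply: eq_get => [[[D G] S]] vt; rewrite get0 get_mk vt /tD /tG /tS /=.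
have E : forall w, w \notin S -> get (d f) (D, G, w |: S) =
    \sum_(u | u \notin w |: S) sg F (w |: S) u * get f (D, G, u |: (w |: S)).
  move=> w wS; rewrite get_mk /tD /tG /tS /=; case: ifP => // vw.
  symmetry; rewrite big1 // => u _; rewrite (@get_bad' _ _ _ _ _ f _ _ _ w) ?mulr0 //.
    by rewrite !inE eqxx orbT.
  by rewrite -(valid_addw vt wS) vw.
under eq_bigr => w wS do rewrite E //.
pose A w u := if [&& w \notin S, u \notin S & u != w]
  then sg F S w * sg F (w |: S) u * get f (D, G, u |: (w |: S)) else 0.
transitivity (\sum_w \sum_u A w u); last first.
  apply: antisym_sum two _ => w u; rewrite /A.
  case: (boolP [&& u \notin S, w \notin S & w != u]) => /and3P; last first.
    move=> h; rewrite ifN ?oppr0 //; apply/and3P => [[a b c]]; apply: h; split => //.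
    by rewrite eq_sym.
  move=> [uS wS ne]; rewrite uS wS eq_sym ne /= setUCA !sg_add //.
  case: (ltngtP (rk u) (rk w)) => h.
  - by ring.
  - by ring.
  - by move: ne; rewrite (rk_inj h) eqxx.
rewrite big_mkcond; apply: eq_bigr => w _; rewrite /A.
case: (boolP (w \in S)) => wS /=; last first.
  rewrite mulr_sumr big_mkcond; apply: eq_bigr => u _; rewrite !inE negb_or.
  by case: (u \in S); case: (eqVneq u w) => //= _; rewrite mulrA.
by rewrite big1_eq.
Qed.

End Cx2.

Section Cx3.
Variables (F : fieldType) (V : finType) (X : {set {set V}}).
Local Notation Tri := (Tri X).
Local Notation Pc := (Pc F X).

Definition minv (A : {set V}) : option V := [pick v in A | [forall u in A, (rk v <= rk u)%N]].

Lemma minvP (A : {set V}) : A != set0 ->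
  exists v, [/\ minv A = Some v, v \in A & forall u, u \in A -> (rk v <= rk u)%N].
Proof.
move=> ne; rewrite /minv; case: pickP => [v /andP [vA /forall_inP h]|none].
  by exists v; split=> // u uA; apply: h.
have /set0Pn [v0 v0A] := ne.
case: (arg_minnP (@rk V) v0A) => v vA hv.
have vA' : v \in A := vA; move: (none v) => /= /negbT; rewrite negb_and vA' /= => /forall_inPn [u uA]; by rewrite hv.
Qed.

Definition s i n (f : Pc i n) : Pc i.+1 n :=
  mk i.+1 n (fun t => if minv (sval (tG t) :\: sval (tD t)) is Some v then
     (if v \in tS t then get f (tD t, tG t, tS t :\ v) else 0) else 0).

Lemma s0 i n : s (0 : Pc i n) = 0.
Proof.
apply: eq_get => t vt; rewrite get_mk vt get0.
by case: minv => // v; rewrite get0 if_same.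
Qed.

Lemma setD1U1 (S : {set V}) (w v : V) : w != v -> (w |: S) :\ v = w |: (S :\ v).
Proof. move=> ne; apply/setP => x; rewrite !inE; case: (eqVneq x v) => [->|] //=; by rewrite eq_sym (negbTE ne). Qed.

Section Fix.
Variables (D G : simp X) (v : V).
Hypotheses (mv : minv (sval G :\: sval D) = Some v) (vA : v \in sval G :\: sval D)
  (vmin : forall u, u \in sval G :\: sval D -> (rk v <= rk u)%N).

Lemma ds_out j n (f : Pc j n) (S : {set V}) : valid j n (D, G, S) -> v \notin S ->
  get (d (s f)) (D, G, S) = get f (D, G, S).
Proof.
move=> vt vS; rewrite get_mk vt /tD /tG /tS /= (bigD1 v) //= big1 ?addr0.
  rewrite get_mk (valid_addw vt vS) vA /tD /tG /tS /= mv setU11 setU1K //.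
  rewrite sg_min ?mul1r // => u uS; apply: vmin.
  by move: vt => /and4P [_ h2 _ _]; apply: subsetP h2 u uS.
move=> w /andP [wS ne]; rewrite get_mk /tD /tG /tS /= mv.
by rewrite !inE eq_sym (negbTE ne) (negbTE vS) /= !if_same mulr0.
Qed.

Lemma ds_in j n (f : Pc j n) (S : {set V}) : valid j n (D, G, S) -> v \in S ->
  get (d (s f)) (D, G, S) = \sum_(w | w \notin S) sg F S w * get f (D, G, w |: (S :\ v)).
Proof.
move=> vt vS; rewrite get_mk vt /tD /tG /tS /=; apply: eq_bigr => w wS; congr (_ * _).
have ne : w != v by apply: contraNneq wS => ->.
rewrite get_mk /tD /tG /tS /= mv (setU1r w vS) (valid_addw vt wS).
case: ifP => wA; first by rewrite setD1U1.
by rewrite (@get_bad' _ _ _ _ _ f _ _ _ w) ?setU11 ?wA.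
Qed.

Lemma sd_in j n (f : Pc j.+1 n) (S : {set V}) : valid j.+1 n (D, G, S) -> v \in S ->
  get (s (d f)) (D, G, S) = get f (D, G, S) +
     \sum_(w | w \notin S) sg F (S :\ v) w * get f (D, G, w |: (S :\ v)).
Proof.
move=> vt vS; rewrite get_mk vt /tD /tG /tS /= mv vS get_mk (valid_delv vt vS).
rewrite /tD /tG /tS /= (bigD1 v) ?setD11 //=; congr (_ + _).
  rewrite setD1K // sg_min ?mul1r // => u; rewrite inE => /andP [_ uS]; apply: vmin.
  by move: vt => /and4P [_ h2 _ _]; apply: subsetP h2 u uS.
apply: eq_bigl => w; rewrite !inE.
by case: (eqVneq w v) => [->|_] /=; rewrite ?vS ?andbT.
Qed.

Lemma sd_out j n (f : Pc j.+1 n) (S : {set V}) : v \notin S -> get (s (d f)) (D, G, S) = 0.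
Proof. by move=> vS; rewrite get_mk /tD /tG /tS /= mv (negbTE vS) if_same. Qed.

End Fix.

Lemma homot j n (f : Pc j.+1 n) (t : Tri) : valid j.+1 n t ->
  get (d (s f)) t + get (s (d f)) t = get f t.
Proof.
case: t => [[D G] S] vt.
have ne : sval G :\: sval D != set0.
  move: vt => /and4P [_ h2 /eqP h3 _]; apply/set0Pn.
  have : S != set0 by rewrite -card_gt0 /tS /= h3.
  by case/set0Pn => x xS; exists x; apply: subsetP h2 x xS.
have [v [mv vA vmin]] := minvP ne.
case: (boolP (v \in S)) => vS; last by rewrite (ds_out mv vA vmin f vt vS) (sd_out mv f vS) addr0.
rewrite (ds_in mv f vt vS) (sd_in mv vmin f vt vS) addrCA -big_split /= big1 ?addr0 // => w wS.
rewrite -mulrDl.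
case: (boolP (w \in sval G :\: sval D)) => wA; last first.
  by rewrite (@get_bad' _ _ _ _ _ f _ _ _ w) ?setU11 ?wA ?mulr0.
have lt : (rk v < rk w)%N.
  rewrite ltn_neqAle vmin // andbT; apply: contraNneq wS => /rk_inj <-; exact: vS.
by rewrite -{1}(setD1K vS) sg_add ?setD11 // lt mulN1r addNr mul0r.
Qed.

Lemma homot0 n (f : Pc 0 n) (t : Tri) : valid 0 n t -> tG t != tD t ->
  get (d (s f)) t = get f t.
Proof.
case: t => [[D G] S] vt; rewrite /tG /tD /= => neGD.
have ne : sval G :\: sval D != set0.
  apply: contraNneq neGD => e; apply/eqP; apply: val_inj; apply/eqP; rewrite eqEsubset.
  move: vt => /and4P [h1 _ _ _]; apply/andP; split; last exact: h1.
  apply/subsetP => x xG.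
  by apply/negPn/negP => xD; move: e => /setP /(_ x); rewrite !inE xD xG.
have [v [mv vA vmin]] := minvP ne.
apply: (ds_out mv vA vmin f vt).
by move: vt => /and4P [_ _ /eqP h3 _]; move: h3; rewrite /tS /= => /cards0_eq ->; rewrite inE.
Qed.

Lemma exact_pos j n (x : Pc j.+1 n) : (2 : F) != 0 ->
  d x = 0 <-> exists y : Pc j.+2 n, d y = x.
Proof.
move=> two; split; last by move=> [y <-]; exact: dd.
move=> hx; exists (s x); apply: eq_get => t vt.
by have := homot x vt; rewrite hx s0 get0 addr0.
Qed.

End Cx3.

Section Eps.
Variables (F : fieldType) (V : finType) (X : {set {set V}}).
Local Notation Tri := (Tri X).
Local Notation Pc := (Pc F X).

Definition eps (n : int) (f : Pc 0 n) : C0 F X n :=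
  (if n == 0 as b return GRing.Lmodule.sort (if b then ({ffun simp X -> F^o} : lmodType F)
                              else ({ffun void -> F^o} : lmodType F))
   then [ffun D => get f (D, D, set0)] else 0).

Lemma C0_triv n (x y : C0 F X n) : n != 0 -> x = y.
Proof.
move: x y; rewrite /= /C0car => x y /negbTE nz; move: x y; rewrite nz => x y.
by apply/ffunP => -[].
Qed.

Lemma eps0 (f : Pc 0 0) : eps f = [ffun D => get f (D, D, set0)] :> {ffun simp X -> F^o}.
Proof. by []. Qed.

Lemma eps_zero m (y : Pc 0 m) : (forall D, get y (D, D, set0) = 0) -> eps y = 0.
Proof.
move=> h; case: (eqVneq m 0) => [e|nz]; last exact: C0_triv.
subst m; apply/ffunP => D; rewrite eps0 ffunE h; change (0 = (0 : {ffun simp X -> F^o}) D); by rewrite ffunE.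
Qed.

Lemma eps_gmor : gmor (Pm F X 0) (C0 F X) (@eps).
Proof.
split.
- move=> n c x y; case: (eqVneq n 0) => [e|nz]; last exact: C0_triv.
  subst n; apply/ffunP => D.
  change ((eps (c *: x + y) : {ffun simp X -> F^o}) D =
     (c *: (eps x : {ffun simp X -> F^o}) + (eps y : {ffun simp X -> F^o})) D).
  by rewrite !ffunE ?eps0 ?ffunE getD getZ.
- move=> D n x; case: (eqVneq n 0) => [e|nz]; last exact: C0_triv.
  subst n; apply/ffunP => G.
  change ((eps (idem D x) : {ffun simp X -> F^o}) G =
     [ffun G => if G == D then (eps x : {ffun simp X -> F^o}) G else 0] G).
  by rewrite !ffunE ?eps0 ?ffunE get_idem /tG /=; case: ifP; rewrite ?ffunE.
- move=> a n x /=; apply: eps_zero => D; rewrite get_arr /tG /=.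
  case: eqVneq => // e; apply: get_bad; apply/orP; left; rewrite e.
  case: (arrP a) => _ c; apply/negP => /subset_leq_card.
  by rewrite c ltnn.
Qed.

Lemma eps_surj n (y : C0 F X n) : exists x : Pc 0 n, eps x = y.
Proof.
case: (eqVneq n 0) => [e|nz]; last by exists 0; exact: C0_triv.
subst n.
exists (mk 0 0 (fun t => if tG t == tD t then (y : {ffun simp X -> F^o}) (tD t) else 0)).
apply/ffunP => D; rewrite eps0 ffunE get_mk /tG /tD /= eqxx.
by rewrite /valid /tD /tG /tS /= subxx sub0set cards0 subnn.
Qed.

Lemma eps_get n (x : Pc 0 n) (D : simp X) : eps x = 0 -> valid 0 n (D, D, set0) ->
  get x (D, D, set0) = 0.
Proof.
move=> hx /and4P [_ _ _ /eqP]; rewrite /tG /tD /= subnn => e; subst n.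
move/ffunP: hx => /(_ D); rewrite eps0 ffunE => ->.
by change ((0 : {ffun simp X -> F^o}) D = 0); rewrite ffunE.
Qed.

Lemma get_ds_diag n (y : Pc 1 n) (D : simp X) (S : {set V}) : get (d y) (D, D, S) = 0.
Proof.
rewrite get_mk; case: ifP => // _; rewrite big1 // => w _.
rewrite (@get_bad' _ _ _ _ _ y _ _ _ w) ?mulr0 //; first by rewrite setU11.
by rewrite setDv inE.
Qed.

Lemma exact0 n (x : Pc 0 n) : eps x = 0 <-> exists y : Pc 1 n, d y = x.
Proof.
split; last by move=> [y <-]; apply: eps_zero => D; exact: get_ds_diag.
move=> hx; exists (s x); apply: eq_get => [[[D G] S]] vt.
case: (eqVneq G D) => [e|ne]; last exact: homot0.
subst G; rewrite get_ds_diag.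
have eS : S = set0.
  by move: vt => /and4P [_ h2 _ _]; move: h2; rewrite /tS /tG /tD /= setDv subset0 => /eqP.
by subst S; rewrite eps_get.
Qed.

End Eps.

Theorem lemma4p2p4 (F : fieldType) (V : finType) (X : {set {set V}}) :
  [pchar F]%R =i pred0 ->
  simplicial_complex X ->
  sc_connected X ->
  B_koszul F X.
Proof.
move=> hc hX _.
have two : (2 : F) != 0.
  by move: (hc 2); rewrite !inE /= => /negbT.
exists (Pm F X), (fun i n => @d F V X i n), (@eps F V X).
split; first exact: Pm_gmod.
split; first by move=> i; exact: Pm_proj hX i.
split; first by move=> i; exact: Pm_gen hX i.
split.
- move=> i; exact: d_gmor.
- exact: eps_gmor.
- move=> n y; exact: eps_surj.
- move=> n x; exact: exact0.
- move=> i n x; exact: exact_pos.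
Qed.
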